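(* Let $\mathbb{K}$ be a field of characteristic zero and let $n\in\mathbb{N}$ with $n\geq 4$. Let $V$ be an $n$-dimensional $\mathbb{K}$-vector space. Then the family of functions $\{\phi_{n,t}\}_{t\in\mathbb{K}}$ on $C^2(V;V)$ is infinite, i.e. the set $\{\phi_{n,t}: t\in\mathbb{K}\}$ is an infinite set of functions.
   Context: An anti-commutative algebra is a vector space $V$ with a bilinear map $\mu:V\times V\to V$ satisfying $\mu(X,Y)=-\mu(Y,X)$. For $\alpha,\beta,\gamma\in\mathbb{K}$, an $(\alpha,\beta,\gamma)$-derivation of $(V,\mu)$ is a linear map $D:V\to V$ with $\alpha D\mu(X,Y)=\beta\mu(DX,Y)+\gamma\mu(X,DY)$ for all $X,Y\in V$; their space is $\mathcal{D}(\alpha,\beta,\gamma)(V,\mu)$. $C^2(V;V)$ is the space of antisymmetric bilinear maps $V\times V\to V$, and for $t\in\mathbb{K}$, $\phi_{n,t}:C^2(V;V)\to\{0,1,\dots,n^2\}$ is defined by $\phi_{n,t}(\mu)=\dim\mathcal{D}(t,1,0)(V,\mu)$. *)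

(* Defs.v *)
From HB Require Import structures.
From mathcomp Require Import all_boot all_order all_algebra.
From mathcomp Require Import boolp classical_sets cardinality.
Set Implicit Arguments. Unset Strict Implicit. Unset Printing Implicit Defensive.
Import GRing.Theory.
Local Open Scope ring_scope.

Section Defs.
Variables (K : fieldType) (V : vectType K).

Definition antisym_bilinear (mu : V -> V -> V) : Prop :=
  [/\ (forall X Y, mu X Y = - mu Y X),
      (forall X, linear (mu X)) &
      (forall Y, linear (fun X => mu X Y))].

Definition C2 := {mu : V -> V -> V | antisym_bilinear mu}.

(* The defect  alpha D mu(X,Y) - beta mu(DX,Y) - gamma mu(X,DY),
   packaged (for bilinear mu) as a linear map in D with values in
   Hom(V, Hom(V,V)). *)
Definition der_defect (mu : V -> V -> V) (a b c : K) (D : 'End(V))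
  : 'Hom(V, 'Hom(V, V)) :=
  linfun (fun X => linfun (fun Y =>
    a *: D (mu X Y) - (b *: mu (D X) Y + c *: mu X (D Y)))).

Definition Der (mu : V -> V -> V) (a b c : K) : {vspace 'End(V)} :=
  lker (linfun (der_defect mu a b c)).

(* phi_{n,t}(mu) = dim D(t,1,0)(V,mu), n = dim V *)
Definition phi (t : K) : C2 -> nat := fun mu => \dim (Der (sval mu) t 1 0).

End Defs.

(* Main.v *)
Require Import Defs.
From HB Require Import structures.
From mathcomp Require Import all_boot all_order all_algebra.
From mathcomp Require Import boolp classical_sets cardinality.
From mathcomp Require Import ring zify.
Import GRing.Theory.
Local Open Scope ring_scope.

Module Helpers.
Set Implicit Arguments. Unset Strict Implicit. Unset Printing Implicit Defensive.
Lemma lfunE' (K : fieldType) (aT rT : vectType K) (f : aT -> rT) (hf : linear f) :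
  linfun f =1 f.
Proof.
move=> v.
pose ff : {linear aT -> rT} := HB.pack f (GRing.isLinear.Build _ _ _ _ f hf).
exact: (lfunE ff).
Qed.

Lemma lin_of (K : fieldType) (aT rT : lmodType K) (f : aT -> rT)
  (hD : forall u v, f (u + v) = f u + f v) (hZ : forall k u, f (k *: u) = k *: f u) :
  linear f.
Proof. by move=> k u v; rewrite hD hZ. Qed.

Lemma lin_comb (K : fieldType) (aT rT : lmodType K) (P Q R : aT -> rT) (a b c : K) :
  linear P -> linear Q -> linear R ->
  linear (fun Y => a *: P Y - (b *: Q Y + c *: R Y)).
Proof.
move=> hP hQ hR; apply: lin_of => [u v|k u].
  have hD : forall (F : aT -> rT), linear F -> forall u v, F (u + v) = F u + F v.
    by move=> F hF u' v'; have := hF 1 u' v'; rewrite !scale1r.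
  rewrite (hD P hP) (hD Q hQ) (hD R hR) !scalerDr.
  by rewrite [(b *: Q u + _) + _]addrACA opprD addrACA.
have hZ : forall (F : aT -> rT), linear F -> forall k u, F (k *: u) = k *: F u.
  move=> F hF k' u'.
  have F0 : F 0 = 0.
    have := hF 1 0 0; rewrite !scale1r addr0 => h; apply: (addrI (F 0)); by rewrite addr0 -h.
  by have := hF k' u' 0; rewrite !addr0 F0 addr0.
rewrite (hZ P hP) (hZ Q hQ) (hZ R hR) scalerBr scalerDr !scalerA.
by rewrite [a * k]mulrC [b * k]mulrC [c * k]mulrC.
Qed.

Lemma lfun2E (K : fieldType) (aT bT rT : vectType K) (g : aT -> bT -> rT)
  (h1 : forall x, linear (g x)) (h2 : forall y, linear (fun x => g x y)) x y :
  linfun (fun x => linfun (g x)) x y = g x y.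
Proof.
rewrite lfunE'; first by rewrite lfunE'.
move=> k u v; apply/lfunP=> y'.
by rewrite add_lfunE scale_lfunE !lfunE' // h2.
Qed.

Lemma lin_comp (K : fieldType) (A B C : lmodType K) (F : B -> C) (G : A -> B) :
  linear F -> linear G -> linear (fun x => F (G x)).
Proof. by move=> hF hG k u v; rewrite hG hF. Qed.

Section DerP.
Variables (K : fieldType) (V : vectType K).

Lemma lin_fun (f : 'End(V)) : linear f.
Proof. by move=> k u v; rewrite linearP. Qed.


Lemma lin_eval (p : V) : linear (fun D : 'End(V) => D p).
Proof. by move=> k D1 D2; rewrite add_lfunE scale_lfunE. Qed.

Lemma derP (mu : V -> V -> V) (hmu : antisym_bilinear mu) (a b c : K) (D : 'End(V)) :
  D \in Der mu a b c <->
  (forall X Y, a *: D (mu X Y) = b *: mu (D X) Y + c *: mu X (D Y)).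
Proof.
case: hmu => _ hY hX.
have h1 : forall (D : 'End(V)) X, linear (fun Y => a *: D (mu X Y) - (b *: mu (D X) Y + c *: mu X (D Y))).
  move=> D' X; apply: lin_comb.
  - exact: lin_comp (lin_fun D') (hY X).
  - exact: hY.
  - exact: lin_comp (hY X) (lin_fun D').
have h2 : forall (D : 'End(V)) Y, linear (fun X => a *: D (mu X Y) - (b *: mu (D X) Y + c *: mu X (D Y))).
  move=> D' Y; apply: lin_comb.
  - exact: lin_comp (lin_fun D') (hX Y).
  - exact: lin_comp (hX Y) (lin_fun D').
  - exact: hX.
have E : forall D X Y, der_defect mu a b c D X Y =
    a *: D (mu X Y) - (b *: mu (D X) Y + c *: mu X (D Y)).
  by move=> D' X Y; rewrite /der_defect lfun2E.
have hD : linear (der_defect mu a b c).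
  move=> k D1 D2; apply/lfunP=> X; apply/lfunP=> Y.
  rewrite add_lfunE scale_lfunE add_lfunE scale_lfunE !E.
  apply: (@lin_comb K _ V (fun D : 'End(V) => D (mu X Y)) (fun D : 'End(V) => mu (D X) Y)
     (fun D : 'End(V) => mu X (D Y))).
  - exact: lin_eval.
  - exact: lin_comp (hX Y) (lin_eval X).
  - exact: lin_comp (hY X) (lin_eval Y).
rewrite /Der memv_ker lfunE' //.
split.
  move=> /eqP H X Y; apply/eqP; rewrite -subr_eq0 -E H.
  by rewrite !lfunE.
move=> H; apply/eqP/lfunP=> X; apply/lfunP=> Y.
by rewrite E H subrr !lfunE.
Qed.
End DerP.
Section Constr.
Variables (K : fieldType) (V : vectType K) (t : K) (a b c d : V) (fa fb fc fd : V -> K).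
Hypotheses (hfa : forall k u v, fa (k *: u + v) = k * fa u + fa v)
  (hfb : forall k u v, fb (k *: u + v) = k * fb u + fb v)
  (hfc : forall k u v, fc (k *: u + v) = k * fc u + fc v)
  (hfd : forall k u v, fd (k *: u + v) = k * fd u + fd v).
Hypotheses (aa : fa a = 1) (ab : fa b = 0) (ac : fa c = 0) (ad : fa d = 0)
  (ba : fb a = 0) (bb : fb b = 1) (bc : fb c = 0) (bd : fb d = 0)
  (ca : fc a = 0) (cb : fc b = 0) (cc : fc c = 1) (cd : fc d = 0)
  (da : fd a = 0) (db : fd b = 0) (dc : fd c = 0) (dd : fd d = 1).

Lemma f0 (f : V -> K) : (forall k u v, f (k *: u + v) = k * f u + f v) -> f 0 = 0.
Proof.
move=> hf; have := hf 1 0 0; rewrite scale1r addr0 mul1r => h.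
by apply: (addrI (f 0)); rewrite addr0 -h.
Qed.

Lemma fZ (f : V -> K) : (forall k u v, f (k *: u + v) = k * f u + f v) ->
  forall k u, f (k *: u) = k * f u.
Proof. by move=> hf k u; have := hf k u 0; rewrite addr0 f0 // addr0. Qed.

Lemma fD (f : V -> K) : (forall k u v, f (k *: u + v) = k * f u + f v) ->
  forall u v, f (u + v) = f u + f v.
Proof. by move=> hf u v; have := hf 1 u v; rewrite scale1r mul1r. Qed.

Lemma fab (f : V -> K) : (forall k u v, f (k *: u + v) = k * f u + f v) ->
  forall x y, f (x *: a + y *: b) = x * f a + y * f b.
Proof. by move=> hf x y; rewrite hf fZ. Qed.

Definition mu (X Y : V) : V :=
  (t * (fa X * fc Y - fc X * fa Y) + (fb X * fd Y - fd X * fb Y)) *: a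
  + (fb X * fc Y - fc X * fb Y) *: b.

Lemma comb2 k x1 x2 y1 y2 :
  (k * x1 + x2) *: a + (k * y1 + y2) *: b = k *: (x1 *: a + y1 *: b) + (x2 *: a + y2 *: b).
Proof. by rewrite scalerDr !scalerDl !scalerA addrACA. Qed.

Lemma mu_bil : antisym_bilinear mu.
Proof.
split.
- move=> X Y; rewrite /mu opprD -!scaleNr; congr (_ *: _ + _ *: _); ring.
- move=> X k u v; rewrite /mu !hfa !hfb !hfc !hfd -comb2.
  congr (_ *: _ + _ *: _); ring.
- move=> Y k u v; rewrite /mu !hfa !hfb !hfc !hfd -comb2.
  congr (_ *: _ + _ *: _); ring.
Qed.

Lemma fb_mu X Y : fb (mu X Y) = fb X * fc Y - fc X * fb Y.
Proof. by rewrite /mu fab // ba bb; ring. Qed.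
Lemma fc_mu X Y : fc (mu X Y) = 0.
Proof. by rewrite /mu fab // ca cb; ring. Qed.

Lemma mu_c w : mu w c = (t * fa w) *: a + fb w *: b.
Proof. by rewrite /mu ac bc cc dc; congr (_ *: _ + _ *: _); ring. Qed.
Lemma mu_bc : mu b c = b.
Proof. by rewrite mu_c ab bb mulr0 scale0r add0r scale1r. Qed.
Lemma mu_bd : mu b d = a.
Proof.
rewrite /mu ab bb cb db ad bd cd dd.
by rewrite !(mul0r, mulr0, mul1r, subrr, add0r, addr0, subr0, scale0r, scale1r).
Qed.
Lemma mu_0l Y : mu 0 Y = 0.
Proof. by rewrite /mu !f0 // !(mul0r, subrr, mulr0, addr0, scale0r). Qed.


Lemma sub_der s : s != 0 -> s != 1 -> s != t ->
  (Der mu s 1 0 <= Der mu t 1 0)%VS.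
Proof.
move=> s0 s1 st; apply/subvP => D /(derP mu_bil) H; apply/(derP mu_bil) => X Y.
have H' : forall X Y, s *: D (mu X Y) = mu (D X) Y.
  move=> X' Y'; rewrite H; rewrite scale0r addr0; exact: scale1r.
have Db0 : D b = 0.
  have := H' b c; rewrite mu_bc mu_c => e.
  have eb := congr1 fb e; rewrite fZ // fab // ba bb mulr0 mulr1 add0r in eb.
  have ea := congr1 fa e; rewrite fZ // fab // aa ab mulr0 mulr1 addr0 in ea.
  have fbw : fb (D b) = 0.
    apply/eqP; move: eb => /eqP; rewrite -subr_eq0 -{2}[fb (D b)]mul1r -mulrBl mulf_eq0.
    by rewrite subr_eq0 (negbTE s1).
  have faw : fa (D b) = 0.
    apply/eqP; move: ea => /eqP; rewrite -subr_eq0 -mulrBl mulf_eq0.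
    by rewrite subr_eq0 (negbTE st).
  move: e; rewrite fbw faw mulr0 !scale0r addr0 => /eqP; rewrite scaler_eq0 (negbTE s0) /=.
  by move/eqP.
have Da0 : D a = 0.
  have := H' b d; rewrite mu_bd Db0 mu_0l => /eqP; rewrite scaler_eq0 (negbTE s0) /=.
  by move/eqP.
have Dmu : D (mu X Y) = 0 by rewrite /mu linearD !linearZ /= Da0 Db0 !scaler0 addr0.
by rewrite -H' Dmu !(scaler0, scale0r, addr0).
Qed.

Definition D0f (X : V) : V := fb X *: a + (t * fc X) *: d.
Lemma D0f_lin : linear D0f.
Proof.
move=> k u v; rewrite /D0f hfb hfc mulrDr !scalerDl scalerDr !scalerA addrACA.
by rewrite [t * (k * _)]mulrCA.
Qed.
Definition D0 : 'End(V) := linfun D0f.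
Lemma D0E X : D0 X = D0f X.
Proof. exact: (lfunE' D0f_lin). Qed.

Lemma D0_in : D0 \in Der mu t 1 0.
Proof.
apply/(derP mu_bil) => X Y; rewrite !D0E /D0f fb_mu fc_mu mulr0 scale0r addr0.
rewrite scale1r scale0r addr0 /mu.
rewrite !hfa !(fZ hfa) !hfb !(fZ hfb) !hfc !(fZ hfc) !hfd !(fZ hfd) aa ad ba bd ca cd da dd.
rewrite !(mul0r, mulr0, mul1r, mulr1, addr0, add0r, subr0, sub0r, subrr, scale0r) scalerA.
by rewrite oppr0 scale0r addr0; congr (_ *: _); ring.
Qed.

Lemma D0_notin s : s != t -> D0 \notin Der mu s 1 0.
Proof.
move=> st; apply/negP => /(derP mu_bil) H.
have := H b c; rewrite mu_bc !D0E /D0f bb cb mulr0 scale0r addr0 scale1r.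
rewrite mu_c aa ba mulr1 !(scale0r, addr0, scale1r) => /eqP; rewrite -subr_eq0 -scalerBl scaler_eq0.
rewrite subr_eq0 (negbTE st) /= => /eqP a0.
by move: aa; rewrite a0 f0 // => /eqP; rewrite eq_sym oner_eq0.
Qed.

Lemma dim_lt s : s != 0 -> s != 1 -> s != t ->
  (\dim (Der mu s 1 0) < \dim (Der mu t 1 0))%N.
Proof.
move=> s0 s1 st; rewrite (ltn_leqif (dimv_leqif_sup (sub_der s0 s1 st))).
apply/negP => /subvP sub; have := sub _ D0_in; apply/negP; exact: D0_notin.
Qed.


Lemma phi_neq s : s != 0 -> s != 1 -> s != t ->
  exists mu0 : C2 V, phi s mu0 <> phi t mu0.
Proof.
move=> s0 s1 st; exists (exist _ mu mu_bil); rewrite /phi /= => e.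
by have := dim_lt s0 s1 st; rewrite e ltnn.
Qed.
End Constr.

Lemma natr_eq_pchar0 (K : fieldType) (h : [pchar K] =i pred0) (m n : nat) :
  (m%:R == n%:R :> K) = (m == n).
Proof.
have key : forall m n : nat, (n <= m)%N -> (m%:R == n%:R :> K) = (m == n).
  move=> m' n' le; rewrite -subr_eq0 -natrB //.
  by move/pcharf0P: h => ->; rewrite subn_eq0 eqn_leq le andbT.
case: (leqP n m) => [le|lt]; first exact: key.
by rewrite eq_sym key ?(ltnW lt) // eq_sym.
Qed.
End Helpers.
Import Helpers.

Theorem theorem2p7 (K : fieldType) (charK0 : [pchar K] =i pred0)
  (n : nat) (hn : (4 <= n)%N) (V : vectType K)
  (hV : \dim (fullv : {vspace V}) = n) :
  ~ finite_set (range (fun t : K => @phi K V t)).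
Proof.
move=> hfin.
pose Xb := vbasis (fullv : {vspace V}).
have hfree : free Xb := basis_free (vbasisP fullv).
have h0 : (0 < \dim (fullv : {vspace V}))%N by rewrite hV; lia.
have h1 : (1 < \dim (fullv : {vspace V}))%N by rewrite hV; lia.
have h2 : (2 < \dim (fullv : {vspace V}))%N by rewrite hV; lia.
have h3 : (3 < \dim (fullv : {vspace V}))%N by rewrite hV; lia.
pose i0 := Ordinal h0; pose i1 := Ordinal h1; pose i2 := Ordinal h2; pose i3 := Ordinal h3.
have lin : forall i (k : K) (u v : V), coord Xb i (k *: u + v) = k * coord Xb i u + coord Xb i v.
  by move=> i k u v; rewrite linearP.
have cf : forall i j : 'I_(\dim (fullv : {vspace V})), coord Xb j Xb`_i = (i == j)%:R.
  by move=> i j; exact: coord_free.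
pose g := fun k : nat => @phi K V (k.+2)%:R.
have ginj : injective g.
  move=> k j e; apply/eqP; apply: contraT => kj.
  have [||| mu0 hmu] := @phi_neq K V (j.+2)%:R Xb`_i0 Xb`_i1 Xb`_i2 Xb`_i3
    (coord Xb i0) (coord Xb i1) (coord Xb i2) (coord Xb i3) (lin i0) (lin i1) (lin i2) (lin i3)
    (cf i0 i0) (cf i1 i0) (cf i2 i0) (cf i3 i0)
    (cf i0 i1) (cf i1 i1) (cf i2 i1) (cf i3 i1)
    (cf i0 i2) (cf i1 i2) (cf i2 i2) (cf i3 i2)
    (cf i0 i3) (cf i1 i3) (cf i2 i3) (cf i3 i3) (k.+2)%:R.
  - by rewrite (natr_eq_pchar0 charK0 _ 0).
  - by rewrite (natr_eq_pchar0 charK0 _ 1).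
  - by rewrite natr_eq_pchar0.
  by exfalso; apply: hmu; rewrite /g in e; rewrite e.
have : finite_set (preimage g (range (fun t : K => @phi K V t))).
  by apply: finite_preimage => // x y _ _; apply: ginj.
have -> : preimage g (range (fun t : K => @phi K V t)) = (setT : set nat).
  by apply/seteqP; split => // x _; exists (x.+2)%:R.
exact: infinite_nat.
Qed.
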